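(* Let $n\ge3$, $k\ge0$, let $R$ be a maximal reversible set in $G_n^k$, and let $x_1,x_2,\dots,x_{k+1}$ be a consistent labeling of $A(R)$. Then for each $i\in\{1,\dots,k+1\}$, $|B(x_i,R)|\le k+2-i$.
   Context: For integers $n\ge3$, $k\ge0$, the crown $S_n^k$ is the poset with ground set $A\cup B$, $A=\{a_1,\dots,a_{n+k}\}$, $B=\{b_1,\dots,b_{n+k}\}$, indices cyclic modulo $n+k$; elements of $A$ are pairwise incomparable, as are elements of $B$, and $a_i$ is incomparable to $b_j$ when $j\in\{i,\dots,i+k\}$ (mod $n+k$), while $a_i<b_j$ otherwise. $\mathrm{Inc}(A,B)$ is the set of pairs $(a,b)\in A\times B$ with $a$ incomparable to $b$; $G_n^k$ has vertex set $\mathrm{Inc}(A,B)$, with $(a,b)$ adjacent to $(x,y)$ iff $a<y$ and $x<b$. A set $R\subseteq\mathrm{Inc}(A,B)$ is reversible if some linear extension $L$ of $S_n^k$ has $b<a$ in $L$ for all $(a,b)\in R$; maximal reversible means maximal under inclusion among reversible sets. For $R\subseteq\mathrm{Inc}(A,B)$ and $a\in A$, $B(a,R)=\{b\in B:(a,b)\in R\}$, and $A(R)=\{a\in A: B(a,R)\ne\emptyset\}$. For a maximal reversible set $R$ one has $|A(R)|=k+1$, and the sets $B(a,R)$, $a\in A(R)$, form a chain under inclusion. A consistent labeling of $A(R)$ is a labeling $A(R)=\{x_1,\dots,x_{k+1}\}$ such that $B(x_\beta,R)\subseteq B(x_\alpha,R)$ whenever $\alpha<\beta$. *)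

(* Defs.v *)
From mathcomp Require Import all_boot all_order.
Set Implicit Arguments. Unset Strict Implicit. Unset Printing Implicit Defensive.

(* Crown S_n^k with N := n + k.  Ground set: A + B, where inl i = a_i and
   inr j = b_j, indices in 'I_(n+k) (cyclic, 0-based). *)

Section Crown.
Variables n k : nat.
Local Notation N := (n + k).

(* a_i is incomparable to b_j iff j in {i, ..., i+k} (mod N),
   i.e. (j - i) mod N <= k. *)
Definition crown_inc (i j : 'I_N) : bool := ((j + N - i) %% N <= k).

Definition crown_ground := ('I_N + 'I_N)%type.

Definition crown_lt (x y : crown_ground) : bool :=
  match x, y with
  | inl i, inr j => ~~ crown_inc i j
  | _, _ => false
  end.

(* A linear extension, represented by an injective position function:
   x precedes y in L iff pos x < pos y. *)
Definition linear_extension (pos : crown_ground -> nat) : Prop :=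
  injective pos /\ forall x y, crown_lt x y -> pos x < pos y.

(* Inc(A,B) = vertex set of G_n^k, pairs (a_i, b_j) encoded as (i, j). *)
Definition Inc : {set 'I_N * 'I_N} := [set p | crown_inc p.1 p.2].

Definition reversible (R : {set 'I_N * 'I_N}) : Prop :=
  R \subset Inc /\
  exists pos, linear_extension pos /\
    forall p, p \in R -> pos (inr p.2) < pos (inl p.1).

Definition maximal_reversible (R : {set 'I_N * 'I_N}) : Prop :=
  reversible R /\ forall R', reversible R' -> R \subset R' -> R' = R.

Definition Bset (a : 'I_N) (R : {set 'I_N * 'I_N}) : {set 'I_N} :=
  [set b | (a, b) \in R].

Definition Aset (R : {set 'I_N * 'I_N}) : {set 'I_N} :=
  [set a | Bset a R != set0].

(* consistent labeling x_1..x_{k+1} of A(R), 0-based: x : 'I_(k+1) -> 'I_N *)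
Definition consistent_labeling (R : {set 'I_N * 'I_N}) (x : 'I_k.+1 -> 'I_N) : Prop :=
  injective x /\ (forall a, a \in Aset R <-> exists i, x i = a) /\
  forall al be : 'I_k.+1, al < be -> Bset (x be) R \subset Bset (x al) R.

End Crown.

(* Main.v *)
Require Import Defs.
From mathcomp Require Import all_boot all_order.
From mathcomp Require Import zify.
Set Implicit Arguments. Unset Strict Implicit.

Lemma iter_ordS N (x0 : 'I_N) j : val (iter j (@ordS N) x0) = (x0 + j) %% N.
Proof.
elim: j => [|j IH] /=; first by rewrite addn0 modn_small.
by rewrite IH addnS -addn1 modnDml addn1.
Qed.

Lemma closed_setT N (Y : {set 'I_N}) : Y != set0 -> (@ordS N) @: Y \subset Y -> Y = setT.
Proof.
case/set0Pn=> x0 Hx0 Hsub; apply/setP=> y; rewrite inE.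
have H : forall j, iter j (@ordS N) x0 \in Y.
  elim=> [|j IH] //=; apply: (subsetP Hsub); exact: imset_f.
have -> : y = iter (y + N - x0) (@ordS N) x0.
  apply: val_inj; rewrite iter_ordS /=.
  have hx := ltn_ord x0; have hy := ltn_ord y.
  have -> : x0 + (y + N - x0) = y + N by lia.
  by rewrite modnDr modn_small.
exact: H.
Qed.

Definition Yset N (S : {set 'I_N}) : nat -> {set 'I_N} :=
  fix Y j := if j is j'.+1 then Y j' :|: (@ordS N) @: Y j' else S.

Arguments Yset {N}.

Lemma Yset_mem N (S : {set 'I_N}) j y : y \in @Yset N S j -> exists b, b \in S /\ exists d, d <= j /\ val y = (b + d) %% N.
Proof.
elim: j y => [|j IH] y /=.
  move=> Hy; exists y; split=> //; exists 0; split=> //; by rewrite addn0 modn_small.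
case/setUP.
  move=> /IH [b [Hb [d [Hd E]]]]; exists b; split=> //; exists d; split=> //; lia.
case/imsetP=> z /IH [b [Hb [d [Hd E]]]] ->; exists b; split=> //; exists d.+1; split=> //.
by rewrite /= E addnS -addn1 modnDml addn1.
Qed.

Lemma Yset_sub N (S : {set 'I_N}) j : S \subset @Yset N S j.
Proof. elim: j => [|j IH] //=; exact: subset_trans IH (subsetUl _ _). Qed.

Lemma Yset_card N (S : {set 'I_N}) j : S != set0 -> @Yset N S j = setT \/ #|S| + j <= #|@Yset N S j|.
Proof.
move=> HS; elim: j => [|j IH]; first by right; rewrite addn0.
have Hne : Yset S j != set0.
  case/set0Pn: HS => s Hs; apply/set0Pn; exists s; by move/subsetP: (Yset_sub S j); apply.
case: (boolP ((@ordS N) @: Yset S j \subset Yset S j)) => Hc.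
  left; rewrite /= (closed_setT Hne Hc); exact: setTU.
right; case: IH => [E|IH].
  by exfalso; move: Hc; rewrite E subsetT.
have Hp : Yset S j \proper Yset S j.+1 by apply: properUl.
have := proper_card Hp; lia.
Qed.

Lemma modaux N b e : b < N -> 0 < e < N -> (b + N - (b + e) %% N) %% N = N - e.
Proof.
move=> hb /andP [he1 he2].
case: (ltnP (b + e) N) => h.
  rewrite (modn_small h).
  have E : b + N - (b + e) = N - e by lia.
  rewrite E modn_small //; lia.
have E : b + e = (b + e - N) + N by lia.
rewrite E modnDr (@modn_small (b + e - N)); last by lia.
have E2 : b + N - (b + e - N) = (N - e) + N by lia.
rewrite E2 modnDr modn_small //; lia.
Qed.

Lemma key N k (S T : {set 'I_N}) : k.+2 <= N -> S != set0 -> T != set0 ->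
 (forall a b, a \in T -> b \in S -> (b + N - a) %% N <= k) -> #|S| + #|T| <= k.+2.
Proof.
move=> HN HS HT H.
set j := N - k.+2.
have Hdis : [disjoint (@ordS N) @: Yset S j & T].
  apply/pred0P => z /=; apply/negbTE/negP => /andP [/imsetP [y Hy ->] Hz].
  case: (Yset_mem Hy) => b [Hb [d [Hd E]]].
  have := H _ _ Hz Hb; rewrite /= E -addn1 modnDml -addnA addn1 (@modaux N b d.+1 (ltn_ord b)).
    move: Hd; rewrite /j; clear -HN; lia.
  move: Hd; rewrite /j => Hd; apply/andP; split=> //; clear -HN Hd; lia.
case: (Yset_card j HS) => [E|Hc].
  case/set0Pn: HT => t Ht.
  move/pred0P: Hdis => /(_ t) /=; rewrite Ht andbT E.
  have -> : t = ordS (ord_pred t) by rewrite ord_predK.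
  by rewrite imset_f // inE.
have Hcard : #|(@ordS N) @: Yset S j| = #|Yset S j| by rewrite card_imset //; exact: ordS_inj.
have HU := cardsU ((@ordS N) @: Yset S j) T.
rewrite disjoint_setI0 // cards0 subn0 in HU.
have Hm : #|(@ordS N) @: Yset S j :|: T| <= N.
  by rewrite -[X in _ <= X]card_ord; exact: max_card.
move: Hc Hcard HU Hm; rewrite /j.
move: #|(@ordS N) @: Yset S j :|: T| #|(@ordS N) @: Yset S j| #|Yset S j| => u v w.
move: HN #|S| #|T|; clear=> HN s t; lia.
Qed.

(* label i : 'I_(k+1) is the paper's index i+1, so |B(x_{i+1},R)| <= k+2-(i+1) *)
Theorem proposition3p1 (n k : nat) (hn : 3 <= n)
  (R : {set 'I_(n + k) * 'I_(n + k)}) (x : 'I_k.+1 -> 'I_(n + k)) :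
  maximal_reversible R -> consistent_labeling R x ->
  forall i : 'I_k.+1, #|Bset (x i) R| <= k + 2 - i.+1.
Proof.
move=> [[HRinc _] _] [xinj [_ Hchain]] i.
case: (eqVneq (Bset (x i) R) set0) => [->|HS]; first by rewrite cards0.
have Hle : i.+1 <= k.+1 := ltn_ord i.
pose T := [set x (widen_ord Hle j) | j : 'I_i.+1].
have HT : #|T| = i.+1.
  rewrite card_imset ?card_ord // => a b /xinj /(congr1 val) /= E; exact: val_inj.
have HTne : T != set0.
  apply/set0Pn; exists (x (widen_ord Hle ord0)); exact: imset_f.
have HN : k.+2 <= n + k by lia.
have Hcond : forall a b, a \in T -> b \in Bset (x i) R -> (b + (n + k) - a) %% (n + k) <= k.
  move=> a b /imsetP [j _ ->] Hb.
  have Hb' : (x (widen_ord Hle j), b) \in R.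
    have hj := ltn_ord j.
    case: (ltnP (widen_ord Hle j) i) => hji.
      have := subsetP (Hchain _ _ hji) b Hb; by rewrite inE.
    have -> : widen_ord Hle j = i by apply: val_inj => /=; move: hji => /= ; lia.
    by move: Hb; rewrite inE.
  by have := subsetP HRinc _ Hb'; rewrite inE.
have := key HN HS HTne Hcond.
rewrite HT; move: #|Bset (x i) R| => s; lia.
Qed.
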